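(* Fix an integer $J\ge 2$, a finite set $\mathcal{G}$ of group labels, and strictly decreasing positive weights $w_1>w_2>\cdots>w_J>0$. Consider a single query (indices $q$ suppressed) in which there are $J$ candidates $j=1,\dots,J$, each with a feature vector $X_j$, a group status $G_j\in\mathcal{G}$ and a real-valued integrable outcome $Y_j$, all defined on a common probability space. Let $\mathcal{I}=\{(X_j,G_j)\}_{j=1}^J$ be the Ranker's information, and let the ranking $j(\cdot):\{1,\dots,J\}\to\{1,\dots,J\}$ be a bijection that is a (measurable) function of $\mathcal{I}$, where $j(r)$ is the index of the candidate placed in rank $r$. Write $\mathbf{G}=(G_{j(1)},\dots,G_{j(J)})$ for the rank-ordered vector of group statuses. Suppose the Ranker is unbiased, i.e. for almost every realization of $\mathcal{I}$ the ranking $j(\cdot)$ maximizes $E\left[\sum_{r=1}^J w_r Y_{j(r)}\,\middle|\,\mathcal{I}\right]$ over all bijections of $\{1,\dots,J\}$. Then for all ranks $1\le a<b\le J$ and all $g\in\mathcal{G}^J$ with $P(\mathbf{G}=g)>0$, $$E\left[Y_{j(a)}-Y_{j(b)}\,\middle|\,\mathbf{G}=g\right]\ \ge\ 0.$$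
   Context: The outcomes $Y_j$ are realized after the ranking and do not depend on the ranking. An Auditor observes only the rank-ordered outcomes $(Y_{j(1)},\dots,Y_{j(J)})$ and the rank-ordered group statuses $\mathbf{G}$, not the features $X_j$. Rank 1 is the best rank and there are no ties. *)

(* Defs.v *)
From HB Require Import structures.
From mathcomp Require Import all_boot all_order all_algebra all_fingroup.
From mathcomp Require Import all_classical all_reals all_analysis.
Set Implicit Arguments. Unset Strict Implicit. Unset Printing Implicit Defensive.
Import Order.TTheory GRing.Theory Num.Theory.
Local Open Scope classical_set_scope.
Local Open Scope ring_scope.

Section Defs.
Context (d : measure_display) (T : measurableType d) (R : realType).

Definition info_sigma (J : nat) (dX : measure_display) (Xt : measurableType dX)
    (Gt : finType) (X : 'I_J -> T -> Xt) (G : 'I_J -> T -> Gt) : set (set T) :=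
  <<s [set A | exists j : 'I_J,
          (exists B : set Xt, measurable B /\ A = X j @^-1` B)
       \/ (exists g : Gt, A = G j @^-1` [set g])] >>.

Definition is_cond_exp (P : probability T R) (S : set (set T)) (Z h : T -> R) : Prop :=
  [/\ P.-integrable setT (EFin \o h),
      (forall B : set R, measurable B -> S (h @^-1` B))
    & (forall A, S A -> (\int[P]_(x in A) (h x)%:E = \int[P]_(x in A) (Z x)%:E)%E)].

Definition cond_exp_event (P : probability T R) (E : set T) (Z : T -> R) : R :=
  fine (\int[P]_(x in E) (Z x)%:E)%E / fine (P E).

End Defs.

(* Main.v *)
Require Import Defs.
From HB Require Import structures.
From mathcomp Require Import all_boot all_order all_algebra all_fingroup.
From mathcomp Require Import all_classical all_reals all_analysis.
From mathcomp Require Import measurable_realfun.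
From mathcomp Require Import ring.
Import Order.TTheory GRing.Theory Num.Theory.
Local Open Scope classical_set_scope.
Local Open Scope ring_scope.
Theorem proposition1
  (d : measure_display) (T : measurableType d) (R : realType)
  (P : probability T R)
  (J : nat) (hJ : (2 <= J)%N)
  (w : 'I_J -> R)
  (hw_pos : forall r : 'I_J, 0 < w r)
  (hw_dec : forall r s : 'I_J, (r < s)%N -> w s < w r)
  (Gt : finType)
  (dX : measure_display) (Xt : measurableType dX)
  (X : 'I_J -> T -> Xt) (G : 'I_J -> T -> Gt) (Y : 'I_J -> T -> R)
  (hX : forall j, measurable_fun setT (X j))
  (hG : forall j (g : Gt), measurable (G j @^-1` [set g]))
  (hY : forall j, P.-integrable setT (EFin \o Y j))
  (rk : T -> {perm 'I_J})
  (hrk : forall s : {perm 'I_J}, info_sigma X G [set x | rk x = s])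
  (unbiased : exists (hrank : T -> R) (hs : {perm 'I_J} -> T -> R),
      [/\ is_cond_exp P (info_sigma X G)
            (fun x => \sum_(r < J) w r * Y (rk x r) x) hrank,
          (forall s : {perm 'I_J}, is_cond_exp P (info_sigma X G)
            (fun x => \sum_(r < J) w r * Y (s r) x) (hs s))
        & {ae P, forall x, forall s : {perm 'I_J}, hs s x <= hrank x}]) :
  forall (a b : 'I_J), (a < b)%N ->
  forall g : 'I_J -> Gt,
    let Eg := [set x | forall r : 'I_J, G (rk x r) x = g r] in
    (0 < P Eg)%E ->
    0 <= cond_exp_event P Eg (fun x => Y (rk x a) x - Y (rk x b) x).
Proof.
move=> a b ab g Eg PEg.
have [hrank [hs [[hrI hrM hrE] hsP hae]]] := unbiased.
set info_gens := [set A | exists j : 'I_J,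
          (exists B : set Xt, measurable B /\ A = X j @^-1` B)
       \/ (exists g : Gt, A = G j @^-1` [set g])].
set S := info_sigma X G.
have Smeas : forall A, S A -> measurable A.
  move=> A; apply: smallest_sub; first exact: sigma_algebra_measurable.
  move=> B [j [[C [mC ->]]|[g0 ->]]]; last exact: hG.
  by rewrite -[X j @^-1` C]setTI; exact: hX.
have SI : forall A B, S A -> S B -> S (A `&` B).
  by move=> A B hA hB; exact: (@measurableI _ (g_sigma_algebraType _) A B hA hB).
have SG : forall j g0, S (G j @^-1` [set g0]).
  by move=> j g0; apply: sub_gen_smallest; exists j; right; exists g0.
pose A (s : {perm 'I_J}) := [set x | rk x = s] `&`
   \bigcap_(r in [set` enum 'I_J]) (G (s r) @^-1` [set g r]).
have SA : forall s, S (A s).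
  move=> s; apply: SI; first exact: hrk.
  rewrite bigcap_seq.
  have := @bigsetI_measurable _ (g_sigma_algebraType (info_gens)) _ (enum 'I_J) xpredT (fun r => G (s r) @^-1` [set g r]).
  by apply => r _; apply: SG.
have memA : forall s x, A s x <-> rk x = s /\ forall r, G (s r) x = g r.
  move=> s x; rewrite /A; split.
    by move=> [-> H]; split => // r; apply: H; rewrite /= mem_enum.
  move=> [e H]; split => // r _; exact: H.
have EgU : Eg = \big[setU/set0]_(s <- enum {perm 'I_J}) A s.
  rewrite -bigcup_seq; apply/seteqP; split => x.
    move=> Ex; exists (rk x); first by rewrite /= mem_enum.
    by apply/memA; split.
  by move=> [s _ /memA [e H]] r; rewrite e.
have ab' : a != b by apply/eqP => e; move: ab; rewrite e ltnn.
have mYk : forall k, measurable_fun setT (fun x => Y (rk x k) x).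
  move=> k.
  have -> : (fun x => Y (rk x k) x) = (fun x => \sum_(s : {perm 'I_J}) (\1_[set y | rk y = s] x : R) * Y (s k) x).
    apply/funext => x; rewrite (bigD1 (rk x)) //= big1 ?addr0.
      by rewrite indicE mem_set // mul1r.
    move=> s sx; rewrite indicE memNset ?mul0r //= => e; move: sx; by rewrite e eqxx.
  apply: measurable_sum => s; apply: measurable_realfun.measurable_funM.
    apply: measurable_realfun.measurable_indic; exact: Smeas (hrk s).
  by apply/measurable_EFinP; exact: measurable_int (hY _).
pose f x := Y (rk x a) x - Y (rk x b) x.
have mf : measurable_fun setT (EFin \o f).
  by apply/measurable_EFinP; apply: measurable_realfun.measurable_funB; apply: mYk.
suff H : (0 <= \int[P]_(x in Eg) (f x)%:E)%E.
  rewrite /cond_exp_event; apply: divr_ge0; first exact: fine_ge0.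
  exact: fine_ge0 (measure_ge0 _ _).
rewrite EgU integral_bigsetU_EFin //; first last.
- by apply: measurable_funS mf.
- apply/trivIsetP => s t _ _ st; apply/seteqP; split => x //=.
  move=> [/memA [e1 _] /memA [e2 _]]; move: st; by rewrite -e1 -e2 eqxx.
- exact: enum_uniq.
- by move=> s; exact: Smeas.
apply: sume_ge0 => s _.
have mA := Smeas _ (SA s).
set u := (tperm a b * s)%g.
pose F (v : {perm 'I_J}) x := \sum_(r < J) w r * Y (v r) x.
have iA : forall h, P.-integrable setT h -> P.-integrable (A s) h.
  by move=> h; exact: integrableS measurableT mA (subsetT _).
have intF : forall v, P.-integrable setT (EFin \o F v).
  move=> v; rewrite (_ : EFin \o F v = fun x => \sum_(r < J) (w r)%:E * (Y (v r) x)%:E)%E; last first.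
    by apply/funext => x; rewrite /= -sumEFin; apply: eq_bigr => r _; rewrite EFinM.
  by apply: (integrable_sum measurableT) => r _; exact: (integrableZl measurableT _ (hY _)).
have e1 : (\int[P]_(x in A s) (hrank x)%:E = \int[P]_(x in A s) (F s x)%:E)%E.
  rewrite hrE; last exact: SA.
  by apply: eq_integral => x /set_mem /memA [e _]; rewrite /F e.
have e2 : (\int[P]_(x in A s) (hs u x)%:E = \int[P]_(x in A s) (F u x)%:E)%E.
  by have [_ _ E] := hsP u; rewrite E; last exact: SA.
have hsI : P.-integrable setT (EFin \o hs u) by have [I _ _] := hsP u.
have le : (\int[P]_(x in A s) (hs u x)%:E <= \int[P]_(x in A s) (hrank x)%:E)%E.
  rewrite -sube_ge0; last by rewrite integrable_fin_num //; exact: iA.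
  rewrite -integralB_EFin //; [|exact: iA|exact: iA].
  rewrite (_ : (fun x => (hrank x)%:E - (hs u x)%:E) = EFin \o (fun y => (hrank y - hs u y)%R))%E; last first.
    by apply/funext => x; rewrite /= EFinB.
  rewrite (ae_eq_integral ((EFin \o (fun y => (hrank y - hs u y)%R))^\+))%E //.
  - by apply: integral_ge0 => x _; exact: funepos_ge0.
  - apply/measurable_EFinP; apply: measurable_realfun.measurable_funB.
      by apply/measurable_EFinP; exact: measurable_int (iA _ hrI).
    by apply/measurable_EFinP; exact: measurable_int (iA _ hsI).
  - apply: measurable_funepos; apply/measurable_EFinP; apply: measurable_realfun.measurable_funB.
      by apply/measurable_EFinP; exact: measurable_int (iA _ hrI).
    by apply/measurable_EFinP; exact: measurable_int (iA _ hsI).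
  - apply: filterS hae => x H Ax; rewrite funeposE /=; apply/esym/max_idPl.
    by rewrite lee_fin subr_ge0; exact: H.
have ih : P.-integrable setT (fun x => (Y (s a) x - Y (s b) x)%:E).
  rewrite (_ : (fun x => (Y (s a) x - Y (s b) x)%:E) = (EFin \o Y (s a)) \- (EFin \o Y (s b)))%E.
    exact: integrableB.
  by apply/funext => x; rewrite /= EFinB.
have key : (0 <= \int[P]_(x in A s) ((w a - w b)%:E * (Y (s a) x - Y (s b) x)%:E))%E.
  have -> : (fun x => ((w a - w b)%:E * (Y (s a) x - Y (s b) x)%:E)%E) = (fun x => (F s x)%:E - (F u x)%:E)%E.
    apply/funext => x; rewrite -EFinM -EFinB; congr EFin.
    rewrite /F -sumrB (bigD1 a) //= (bigD1 b) /=; last by rewrite eq_sym ab'.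
    rewrite big1 ?addr0; last first.
      by move=> r /andP[ra rb]; rewrite /u permM tpermD 1?eq_sym // subrr.
    rewrite /u !permM tpermL tpermR; ring.
  rewrite integralB_EFin //; [|exact: iA|exact: iA].
  rewrite -e1 -e2 sube_ge0 ?le //.
  by rewrite integrable_fin_num //; exact: iA.
rewrite (integralZl mA (iA _ ih)) pmule_rge0 in key; last first.
  by rewrite lte_fin subr_gt0; exact: hw_dec.
have -> : (\int[P]_(x in A s) (f x)%:E = \int[P]_(x in A s) (Y (s a) x - Y (s b) x)%:E)%E.
  by apply: eq_integral => x /set_mem /memA [e _]; rewrite /f e.
exact: key.
Qed.
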